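(* If $x\in\Gamma_s$, then for all $i,j,k,l$ in the same connected component of $G_x$ such that $x_{ij}>0$ and $x_{kl}>0$, we have $a_{ij}p_{ij}=a_{kl}p_{kl}$.
   Context: Let $G=(\mathbb{V},E)$ be a finite graph with adjacency $\sim$ and edge set $E$. Let $a_{ij}=a_{ji}\ge0$ ($>0$ only if $i\sim j$) and $p_{ij}=p_{ji}\in[0,1]$ ($=0$ if $i\not\sim j$), with some $a_{ij}p_{ij}>0$. Fix $h_1\in(0,1]$; $\Delta$ is the set of arrays $x=(x_{ij})$ with $x_{ij}=x_{ji}\ge0$, $x_{ij}=0$ if $i\not\sim j$, $\sum_{i,j}x_{ij}=1$, $\sum_{(i,j):a_{ij}p_{ij}>0}x_{ij}\ge h_1$; $x_i=\sum_jx_{ij}$. $\partial\Delta$: the $x\in\Delta$ for which some vertex $i$ having a neighbour $j$ with $a_{ij}p_{ij}>0$ has $\sum_{j:a_{ij}p_{ij}>0}x_{ij}=0$. $H(x)=\sum_{(i,j):x_{ij}>0}a_{ij}p_{ij}x_{ij}^2/(x_ix_j)$; $y_{ij}=a_{ij}p_{ij}x_{ij}/(x_ix_j)$ ($0$ if $a_{ij}p_{ij}=0$); $F(x)_{ij}=x_{ij}(y_{ij}-H(x))$ ($0$ if $x_{ij}=0$); $\Gamma=\{x\in\Delta:F(x)=0\}$, $\Gamma_0=\Gamma\cap(\Delta\setminus\partial\Delta)$. For $x\in\Gamma_0$, $J(x)$ is the Jacobian (indexed by pairs of edges) of $(x_e)_{e\in E}\mapsto(F_e(x))_{e\in E}$,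 with $x_{ij}=x_{ji}=x_e$ for $e=\{i,j\}$, $x_i=\sum_jx_{ij}$, the formulas for $H$ (terms with $a_{ij}p_{ij}>0$) and $F$ regarded as smooth functions of the unconstrained variables near $x$. $\Gamma_s$ is the set of $x\in\Gamma_0$ such that all eigenvalues of $J(x)$ have nonpositive real part (linearly stable equilibria). $G_x$ is the subgraph with vertex set $\mathbb{V}$ and $i,j$ adjacent iff $x_{ij}>0$. *)

(* Defs.v *)
From HB Require Import structures.
From mathcomp Require Import all_boot all_order all_algebra.
From mathcomp Require Import all_classical all_reals all_analysis.
From mathcomp Require Import complex.
Set Implicit Arguments. Unset Strict Implicit. Unset Printing Implicit Defensive.
Import Order.TTheory GRing.Theory Num.Theory.
Import numFieldNormedType.Exports.
Local Open Scope ring_scope.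

Section Defs.
Variables (R : realType) (T : finType).

Definition simple_graph (adj : rel T) : Prop :=
  (forall i, ~~ adj i i) /\ (forall i j, adj i j = adj j i).

Definition weights_ok (adj : rel T) (a p : T -> T -> R) : Prop :=
  [/\ forall i j, a i j = a j i,
      forall i j, 0 <= a i j &
      forall i j, 0 < a i j -> adj i j] /\
  [/\ forall i j, p i j = p j i,
      forall i j, 0 <= p i j <= 1,
      forall i j, ~~ adj i j -> p i j = 0 &
      exists i j, 0 < a i j * p i j].

Definition xv (x : T -> T -> R) (i : T) : R := \sum_j x i j.

Definition inDelta (adj : rel T) (a p : T -> T -> R) (h1 : R)
    (x : T -> T -> R) : Prop :=
  [/\ forall i j, x i j = x j i,
      forall i j, 0 <= x i j,
      forall i j, ~~ adj i j -> x i j = 0,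
      \sum_i \sum_j x i j = 1 &
      h1 <= \sum_i \sum_(j | 0 < a i j * p i j) x i j].

Definition inBoundary (a p : T -> T -> R) (x : T -> T -> R) : Prop :=
  exists i, (exists j, 0 < a i j * p i j) /\
            \sum_(j | 0 < a i j * p i j) x i j = 0.

Definition Hf (a p : T -> T -> R) (x : T -> T -> R) : R :=
  \sum_i \sum_(j | 0 < x i j) a i j * p i j * x i j ^+ 2 / (xv x i * xv x j).

Definition yf (a p : T -> T -> R) (x : T -> T -> R) (i j : T) : R :=
  if 0 < a i j * p i j then a i j * p i j * x i j / (xv x i * xv x j) else 0.

Definition Ff (a p : T -> T -> R) (x : T -> T -> R) (i j : T) : R :=
  if x i j == 0 then 0 else x i j * (yf a p x i j - Hf a p x).

Definition inGamma adj a p h1 x : Prop :=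
  inDelta adj a p h1 x /\ forall i j, Ff a p x i j = 0.

Definition inGamma0 adj a p h1 x : Prop :=
  inGamma adj a p h1 x /\ ~ inBoundary a p x.

Definition is_edge (adj : rel T) (e : {set T}) : bool :=
  [exists i, exists j, adj i j && (e == [set i; j])].

Definition edge (adj : rel T) := {e : {set T} | is_edge adj e}.

Definition nE (adj : rel T) : nat := #|{: edge adj}|.

Definition edge_set (adj : rel T) (k : 'I_(nE adj)) : {set T} :=
  val (enum_val k).

(* value at the edge e of an array f, read off at the endpoints i, j of e
   (taken once, with i listed before j in the enumeration of T) *)
Definition at_edge (f : T -> T -> R) (e : {set T}) : R :=
  \sum_i \sum_(j | ([set i; j] == e) && (enum_rank i < enum_rank j)%N) f i j.

(* the point x in the unconstrained edge variables (x_e)_{e in E} *)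
Definition xvec (adj : rel T) (x : T -> T -> R) : 'rV[R]_(nE adj) :=
  \row_k at_edge x (edge_set k).

Definition zarr (adj : rel T) (z : 'rV[R]_(nE adj)) (i j : T) : R :=
  \sum_(k < nE adj | edge_set k == [set i; j]) z 0 k.

(* H, y and F as smooth functions of the unconstrained variables
   (H only has the terms with a_ij p_ij > 0). *)
Definition Hs (adj : rel T) (a p : T -> T -> R) (z : 'rV[R]_(nE adj)) : R :=
  \sum_i \sum_(j | 0 < a i j * p i j)
     a i j * p i j * zarr z i j ^+ 2 / (xv (zarr z) i * xv (zarr z) j).

Definition ys (adj : rel T) (a p : T -> T -> R) (z : 'rV[R]_(nE adj)) (i j : T) : R :=
  if 0 < a i j * p i j
  then a i j * p i j * zarr z i j / (xv (zarr z) i * xv (zarr z) j) else 0.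

Definition Fs (adj : rel T) (a p : T -> T -> R) (z : 'rV[R]_(nE adj))
    : 'rV[R]_(nE adj) :=
  \row_k at_edge (fun i j => zarr z i j * (ys a p z i j - Hs a p z)) (edge_set k).

Definition Jac (adj : rel T) (a p : T -> T -> R) (z : 'rV[R]_(nE adj))
    : 'M[R]_(nE adj) :=
  \matrix_(k, l) ('D_(delta_mx 0 l) (Fs a p) z) 0 k.

Definition inGammaS adj a p h1 x : Prop :=
  inGamma0 adj a p h1 x /\
  forall lam : R[i],
    eigenvalue (map_mx (fun r : R => r%:C%C) (Jac a p (xvec adj x))) lam ->
    complex.Re lam <= 0.

Definition Gx (x : T -> T -> R) : rel T := fun i j => 0 < x i j.

End Defs.

(* Main.v *)
Require Import Defs.
From HB Require Import structures.
From mathcomp Require Import all_boot all_order all_algebra.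
From mathcomp Require Import all_classical all_reals all_analysis.
From mathcomp Require Import complex.
From mathcomp Require Import ring lra.
From mathcomp Require Import spectral sesquilinear.
Set Implicit Arguments. Unset Strict Implicit. Unset Printing Implicit Defensive.
Import Order.TTheory GRing.Theory Num.Theory.
Import numFieldNormedType.Exports.
Local Open Scope ring_scope.
Section Comb.
Variables (T : finType) (adj : rel T).

Lemma set2_eqP (i j u w : T) : i != j ->
  ([set i; j] == [set u; w]) = ((u == i) && (w == j)) || ((u == j) && (w == i)).
Proof.
move=> ij; apply/eqP/idP.
- move=> /setP H.
  have Hu : u \in [set i; j] by rewrite H !inE eqxx.
  have Hi : i \in [set u; w] by rewrite -H !inE eqxx.
  have Hj : j \in [set u; w] by rewrite -H !inE eqxx orbT.
  rewrite !inE in Hu Hi Hj.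
  case/orP: Hu => /eqP Eu; subst u.
  + rewrite eqxx /=; case/orP: Hj => /eqP; last by move=> ->; rewrite eqxx.
    by move=> E; rewrite E eqxx in ij.
  + rewrite eqxx orbC /=; case/orP: Hi => /eqP; last by move=> ->; rewrite eqxx.
    by move=> E; rewrite E eqxx in ij.
- by case/orP => /andP [/eqP -> /eqP ->] //; rewrite finset.setUC.
Qed.

Lemma sum_set2 (R : pzSemiRingType) (i j u : T) (F : T -> R) : i != j ->
  \sum_w ([set i; j] == [set u; w])%:R * F w =
  if u == i then F j else if u == j then F i else 0.
Proof.
move=> ij; under eq_bigr do rewrite set2_eqP //.
case: (eqVneq u i) => [->|ui].
  rewrite (bigD1 j) //= !eqxx (negbTE ij) /= ?orbF mul1r big1 ?addr0 // => w /negbTE ->.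
  by rewrite /= ?orbF ?andbF mul0r.
case: (eqVneq u j) => [<-|uj].
  rewrite (bigD1 i) //= !eqxx /= ?orbF mul1r big1 ?addr0 // => w /negbTE ->.
  by rewrite /= ?orbF ?andbF mul0r.
by rewrite big1 // => w _; rewrite ?(negbTE ui) ?(negbTE uj) /= mul0r.
Qed.

Lemma E_pair (k : 'I_(nE adj)) : exists i j, adj i j /\ edge_set k = [set i; j].
Proof.
have := valP (enum_val k); rewrite /is_edge => /existsP [i /existsP [j /andP [aij /eqP e]]].
by exists i, j.
Qed.

Lemma E_inj : injective (@edge_set T adj).
Proof. by move=> k l /val_inj /enum_val_inj. Qed.

Hypothesis Hirr : forall i, ~~ adj i i.
Hypothesis Hsym : forall i j, adj i j = adj j i.

Lemma adj_neq i j : adj i j -> i != j.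
Proof. by move=> aij; apply/eqP => e; subst; rewrite (negbTE (Hirr j)) in aij. Qed.

Lemma E_exists i j : adj i j -> exists k : 'I_(nE adj), edge_set k = [set i; j].
Proof.
move=> aij.
have ie : is_edge adj [set i; j].
  by apply/existsP; exists i; apply/existsP; exists j; rewrite aij eqxx.
exists (enum_rank (exist (fun e => is_edge adj e) [set i; j] ie : edge adj)).
by rewrite /edge_set enum_rankK.
Qed.

Lemma E_adj (k : 'I_(nE adj)) i j : edge_set k = [set i; j] -> adj i j.
Proof.
have [u [w [auw Ek]]] := E_pair k; rewrite Ek => /eqP.
rewrite set2_eqP ?adj_neq // => /orP [] /andP [/eqP -> /eqP ->] //.
by rewrite Hsym.
Qed.

Lemma E_neq (k : 'I_(nE adj)) i j : edge_set k = [set i; j] -> i != j.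
Proof. by move/E_adj/adj_neq. Qed.

End Comb.
Section Arr.
Variables (R : realType) (T : finType) (adj : rel T).
Hypothesis Hirr : forall i, ~~ adj i i.
Hypothesis Hsym : forall i j, adj i j = adj j i.
Local Notation n := (nE adj).
Local Notation E := (@edge_set T adj).

Lemma sum_ifij (i j : T) (A B : R) : i != j ->
  \sum_u (if u == i then A else if u == j then B else 0) = A + B.
Proof.
move=> ij; rewrite (bigD1 i) //= (bigD1 j) /=; last by rewrite eq_sym.
rewrite !eqxx eq_sym (negbTE ij) big1 ?addr0 // => u /andP [/negbTE -> /negbTE ->] //.
Qed.

Lemma at_edge_pair (f : T -> T -> R) i j : i != j -> (forall u w, f u w = f w u) ->
  at_edge f [set i; j] = f i j.
Proof.
move=> ij fs; rewrite /at_edge.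
rewrite (eq_bigr (fun u => if u == i then ((enum_rank i < enum_rank j)%N)%:R * f i j
     else if u == j then ((enum_rank j < enum_rank i)%N)%:R * f j i else 0)).
  rewrite sum_ifij // fs -mulrDl.
  have : enum_rank i != enum_rank j by apply: contra ij => /eqP /enum_rank_inj ->.
  case: ltngtP => //= H _.
  - by rewrite addr0 mul1r.
  - by rewrite add0r mul1r.
  - by have E := enum_rank_inj (val_inj H); rewrite E eqxx in ij.
move=> u _; rewrite big_mkcond /=.
transitivity (\sum_w ([set i; j] == [set u; w])%:R * (((enum_rank u < enum_rank w)%N)%:R * f u w)).
  apply: eq_bigr => w _; rewrite eq_sym.
  by case: ([set i; j] == [set u; w]); case: (_ < _)%N; rewrite /= ?mulr1n ?mulr0n ?mul1r ?mul0r.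
rewrite sum_set2 //.
by case: (eqVneq u i) => [->|_] //; case: (eqVneq u j) => [->|_].
Qed.


Lemma zarr_coef (z : 'rV[R]_n) i j :
  zarr z i j = \sum_k (E k == [set i; j])%:R * z 0 k.
Proof.
rewrite /zarr big_mkcond /=; apply: eq_bigr => k _.
by case: (E k == [set i; j]); rewrite /= ?mul1r ?mul0r.
Qed.

Lemma zarr_sym (z : 'rV[R]_n) i j : zarr z i j = zarr z j i.
Proof. by rewrite /zarr finset.setUC. Qed.

Lemma zarr_lin (z v : 'rV[R]_n) (h : R) i j :
  zarr (h *: v + z) i j = zarr z i j + h * zarr v i j.
Proof.
rewrite !zarr_coef mulr_sumr -big_split /=; apply: eq_bigr => k _.
by rewrite !mxE; ring.
Qed.

Lemma zarr_delta (l : 'I_n) i j :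
  zarr (delta_mx 0 l : 'rV[R]_n) i j = (E l == [set i; j])%:R.
Proof.
rewrite zarr_coef (bigD1 l) //= mxE !eqxx /= mulr1 big1 ?addr0 // => k kl.
by rewrite mxE eqxx /= (negbTE kl) mulr0.
Qed.

Lemma xv_delta (l : 'I_n) u :
  xv (zarr (delta_mx 0 l : 'rV[R]_n)) u = (u \in E l)%:R.
Proof.
have [a [b [ab El]]] := E_pair l.
have nab : a != b by apply: adj_neq.
rewrite /xv (eq_bigr (fun w => ([set a; b] == [set u; w])%:R * 1)); last first.
  by move=> w _; rewrite zarr_delta El mulr1.
rewrite sum_set2 // El !inE.
by case: (eqVneq u a) => [->|_] //; case: (eqVneq u b).
Qed.

Lemma zarr_at (z : 'rV[R]_n) k a b : E k = [set a; b] -> zarr z a b = z 0 k.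
Proof.
move=> Ek; rewrite /zarr (big_pred1 k) // => l; apply/eqP/eqP => [El|->//].
by apply: E_inj; rewrite El Ek.
Qed.

Lemma xvec_E (x : T -> T -> R) k a b : (forall i j, x i j = x j i) ->
  E k = [set a; b] -> xvec adj x 0 k = x a b.
Proof.
move=> xs Ek; rewrite /xvec mxE Ek at_edge_pair //.
exact: (E_neq Hirr Hsym Ek).
Qed.

Lemma zarr_xvec (x : T -> T -> R) i j : (forall i j, x i j = x j i) ->
  (forall i j, ~~ adj i j -> x i j = 0) -> zarr (xvec adj x) i j = x i j.
Proof.
move=> xs x0; case: (boolP (adj i j)) => aij.
  have [k Ek] := E_exists aij.
  by rewrite (zarr_at _ Ek) (xvec_E xs Ek).
rewrite x0 // /zarr big1 // => k /eqP Ek.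
by rewrite (E_adj Hirr Hsym Ek) in aij.
Qed.

End Arr.
Section Deriv.
Variables (R : realType) (V : normedModType R) (z v : V).

Lemma isd_lin (f : V -> R) (c : R) :
  (forall h, f (h *: v + z) = f z + h * c) -> is_derive z v f c.
Proof.
move=> Hf.
have E h : h != 0 -> h^-1 *: ((f \o shift z) (h *: v) - f z) = c.
  move=> h0; rewrite /= Hf addrC addKr.
  by rewrite [_ *: _]mulrA mulVf // mul1r.
split.
  apply: (is_cvg_near_cst c); near=> h; apply: E; near: h; exact: nbhs_dnbhs_neq.
rewrite /derive; apply: lim_near_cst => //; near=> h; apply: E; near: h.
exact: nbhs_dnbhs_neq.
Unshelve. all: by end_near.
Qed.

Lemma isdC (c : R) : is_derive z v (fun _ => c) 0.
Proof. by apply: isd_lin => h; rewrite mulr0 addr0. Qed.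

Lemma isdM (f g : V -> R) df dg : is_derive z v f df -> is_derive z v g dg ->
  is_derive z v (fun y => f y * g y) (f z * dg + g z * df).
Proof. by move=> Hf Hg; have := is_deriveM Hf Hg. Qed.

Lemma isdD (f g : V -> R) df dg : is_derive z v f df -> is_derive z v g dg ->
  is_derive z v (fun y => f y + g y) (df + dg).
Proof. by move=> Hf Hg; have := is_deriveD Hf Hg. Qed.

Lemma isdB (f g : V -> R) df dg : is_derive z v f df -> is_derive z v g dg ->
  is_derive z v (fun y => f y - g y) (df - dg).
Proof. by move=> Hf Hg; have := is_deriveB Hf Hg. Qed.

Lemma isdV (f : V -> R) df : f z != 0 -> is_derive z v f df ->
  is_derive z v (fun y => (f y)^-1) (- (f z) ^- 2 * df).
Proof.
move=> fz Hf; have d0 : derivable f z v by case: Hf.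
have d := derivableV fz d0.
have := derivableP d; rewrite deriveV // derive_val; exact.
Qed.

Lemma isd_eq (f : V -> R) d d' : is_derive z v f d -> d = d' -> is_derive z v f d'.
Proof. by move=> H <-. Qed.

Lemma isd_ext (f g : V -> R) d : (forall y, f y = g y) -> is_derive z v f d -> is_derive z v g d.
Proof. by move=> fg; have -> : f = g by apply: funext. Qed.

Lemma isd_sum (I : finType) (P : pred I) (F : I -> V -> R) (dF : I -> R) :
  (forall i, P i -> is_derive z v (F i) (dF i)) ->
  is_derive z v (fun y => \sum_(i | P i) F i y) (\sum_(i | P i) dF i).
Proof.
move=> HF; rewrite /index_enum; elim: (Finite.enum I) => [|i r IH].
  apply: (isd_ext (f := fun _ => 0)); first by move=> y; rewrite big_nil.
  by rewrite big_nil; apply: isdC.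
rewrite big_cons; case: (boolP (P i)) => Pi.
  apply: (isd_ext (f := fun y => F i y + \sum_(j <- r | P j) F j y)).
    by move=> y; rewrite big_cons Pi.
  by apply: isdD => //; apply: HF.
apply: (isd_ext (f := fun y => \sum_(j <- r | P j) F j y)) => //.
by move=> y; rewrite big_cons (negbTE Pi).
Qed.

End Deriv.
Section Jacobian.
Variables (R : realType) (T : finType) (adj : rel T) (a p x : T -> T -> R).
Hypothesis Hirr : forall i, ~~ adj i i.
Hypothesis Hsym : forall i j, adj i j = adj j i.
Hypothesis as_ : forall i j, a i j = a j i.
Hypothesis ps : forall i j, p i j = p j i.
Hypothesis xs : forall i j, x i j = x j i.
Hypothesis x0 : forall i j, ~~ adj i j -> x i j = 0.
Hypothesis xpos : forall i j, 0 < a i j * p i j -> 0 < xv x i.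
Local Notation n := (nE adj).
Local Notation E := (@edge_set T adj).
Local Notation z0 := (xvec adj x).
Local Notation c i j := (a i j * p i j).

Lemma X0 u : xv (zarr z0) u = xv x u.
Proof. by rewrite /xv; apply: eq_bigr => j _; rewrite zarr_xvec. Qed.

Lemma Z0 i j : zarr z0 i j = x i j.
Proof. by rewrite zarr_xvec. Qed.

Variable v : 'rV[R]_n.

Lemma isd_zarr i j : is_derive z0 v (fun t : 'rV[R]_n => zarr t i j) (zarr v i j).
Proof. by apply: isd_lin => h; rewrite zarr_lin. Qed.

Lemma isd_X u : is_derive z0 v (fun t : 'rV[R]_n => xv (zarr t) u) (xv (zarr v) u).
Proof.
apply: isd_lin => h; rewrite /xv mulr_sumr -big_split /=.
by apply: eq_bigr => j _; rewrite zarr_lin.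
Qed.

Definition Wd (t : 'rV[R]_n) i j := xv (zarr t) i * xv (zarr t) j.

Lemma W0_neq0 i j : 0 < c i j -> Wd z0 i j != 0.
Proof.
move=> cp; rewrite /Wd !X0 mulf_neq0 // gt_eqF //; first exact: (xpos cp).
by apply: (@xpos j i); rewrite as_ ps.
Qed.

Definition dW i j := xv (zarr v) i * xv x j + xv x i * xv (zarr v) j.

Lemma isd_W i j : is_derive z0 v (fun t => Wd t i j) (dW i j).
Proof.
apply: isd_eq; first by apply: isdM; [apply: isd_X | apply: isd_X].
by rewrite /dW !X0; ring.
Qed.

Definition dys i j := if 0 < c i j then
   c i j * (zarr v i j * Wd z0 i j - x i j * dW i j) / (Wd z0 i j) ^+ 2 else 0.

Lemma isd_ys i j : is_derive z0 v (fun t => ys a p t i j) (dys i j).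
Proof.
rewrite /dys; case: (boolP (0 < c i j)) => cp.
  apply: (isd_ext (f := fun t => (c i j * zarr t i j) * (Wd t i j)^-1)).
    by move=> t; rewrite /ys cp.
  apply: isd_eq.
    apply: isdM; last exact: (isdV (f := fun t => Wd t i j) (W0_neq0 cp) (isd_W i j)).
    apply: isd_eq; first exact: (isdM (isdC _ _ (c i j)) (isd_zarr i j)).
    reflexivity.
  have W0 := W0_neq0 cp.
  by rewrite Z0; field.
apply: (isd_ext _ (isdC z0 v 0)).
by move=> t; rewrite /ys (negbTE cp).
Qed.


Definition dHt i j := c i j * (2 * x i j * zarr v i j * Wd z0 i j - x i j ^+ 2 * dW i j)
   / (Wd z0 i j) ^+ 2.
Definition dH := \sum_i \sum_(j | 0 < c i j) dHt i j.

Lemma isd_Hs : is_derive z0 v (Hs a p) dH.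
Proof.
apply: (isd_ext (f := fun t => \sum_i \sum_(j | 0 < c i j)
   (c i j * (zarr t i j * zarr t i j)) * (Wd t i j)^-1)).
  by move=> t; rewrite /Hs; apply: eq_bigr => i _; apply: eq_bigr => j _; rewrite expr2.
apply: isd_sum => i _; apply: isd_sum => j cp.
apply: isd_eq.
  apply: isdM; last exact: (isdV (f := fun t => Wd t i j) (W0_neq0 cp) (isd_W i j)).
  apply: isd_eq; first exact: (isdM (isdC _ _ (c i j)) (isdM (isd_zarr i j) (isd_zarr i j))).
  reflexivity.
have W0 := W0_neq0 cp.
by rewrite /dHt Z0; field.
Qed.

Lemma ys_sym (t : 'rV[R]_n) i j : ys a p t i j = ys a p t j i.
Proof. by rewrite /ys as_ ps zarr_sym [xv _ i * _]mulrC. Qed.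

Lemma Fs_entry (t : 'rV[R]_n) k i j : E k = [set i; j] ->
  Fs a p t 0 k = zarr t i j * (ys a p t i j - Hs a p t).
Proof.
move=> Ek; rewrite /Fs mxE Ek at_edge_pair //; first exact: (E_neq Hirr Hsym Ek).
by move=> u w; rewrite zarr_sym ys_sym.
Qed.

Lemma isd_F k i j : E k = [set i; j] ->
  is_derive z0 v (fun t => Fs a p t 0 k)
    (x i j * (dys i j - dH) + (ys a p z0 i j - Hs a p z0) * zarr v i j).
Proof.
move=> Ek.
apply: (isd_ext (f := fun t => zarr t i j * (ys a p t i j - Hs a p t))).
  by move=> t; rewrite (Fs_entry _ Ek).
apply: isd_eq; first exact: (isdM (isd_zarr i j) (isdB (isd_ys i j) isd_Hs)).
by rewrite /= Z0.
Qed.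

End Jacobian.
Section JacF.
Variables (R : realType) (T : finType) (adj : rel T) (a p x : T -> T -> R).
Hypothesis Hirr : forall i, ~~ adj i i.
Hypothesis Hsym : forall i j, adj i j = adj j i.
Hypothesis as_ : forall i j, a i j = a j i.
Hypothesis ps : forall i j, p i j = p j i.
Hypothesis xs : forall i j, x i j = x j i.
Hypothesis x0 : forall i j, ~~ adj i j -> x i j = 0.
Hypothesis xpos : forall i j, 0 < a i j * p i j -> 0 < xv x i.
Hypothesis xnn : forall i j, 0 <= x i j.
Hypothesis cx : forall i j, 0 < x i j -> 0 < a i j * p i j.
Hypothesis yH : forall i j, 0 < x i j -> ys a p (xvec adj x) i j = Hs a p (xvec adj x).
Local Notation n := (nE adj).
Local Notation E := (@edge_set T adj).
Local Notation z0 := (xvec adj x).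
Local Notation c i j := (a i j * p i j).

Definition Bm (k l : 'I_n) : R := \sum_(w in E k :&: E l) (xv x w)^-1.
Definition gv (l : 'I_n) : R := dH a p x (delta_mx 0 l).
Local Notation H0 := (Hs a p z0).

Lemma Jac_entry k l :
  Jac a p z0 k l = 'D_(delta_mx 0 l) (fun t => Fs a p t 0 k) z0.
Proof.
rewrite /Jac mxE derive_mx ?mxE //.
apply/derivable_mxP => i j; rewrite (ord1 i).
have [u [w [_ Ej]]] := E_pair j.
by have [] := isd_F Hirr Hsym as_ ps xs x0 xpos (delta_mx 0 l) Ej.
Qed.

Lemma Jac_isd k l i j : E k = [set i; j] ->
  Jac a p z0 k l = x i j * (dys a p x (delta_mx 0 l) i j - gv l)
     + (ys a p z0 i j - H0) * (k == l)%:R.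
Proof.
move=> Ek; rewrite Jac_entry.
have := isd_F Hirr Hsym as_ ps xs x0 xpos (delta_mx 0 l) Ek.
move=> H; rewrite (@derive_val _ _ _ _ _ _ _ H) zarr_delta -Ek.
by rewrite /gv (inj_eq (@E_inj _ _)) eq_sym.
Qed.

Lemma B_pair k l i j : E k = [set i; j] ->
  Bm k l = (i \in E l)%:R * (xv x i)^-1 + (j \in E l)%:R * (xv x j)^-1.
Proof.
move=> Ek; have ij := E_neq Hirr Hsym Ek.
rewrite /Bm Ek big_mkcond (bigD1 i) //= (bigD1 j) //=; last by rewrite eq_sym.
rewrite big1 ?addr0.
  rewrite !finset.in_setI !in_set2 !eqxx /= eq_sym (negbTE ij) /=.
  by case: (i \in E l); case: (j \in E l); rewrite /= ?mul1r ?mul0r ?addr0 ?add0r.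
move=> w /andP [wi wj]; rewrite finset.in_setI in_set2 (negbTE wi) (negbTE wj) //.
Qed.

Lemma JacS k l : 0 < z0 0 k ->
  Jac a p z0 k l = H0 * ((k == l)%:R - z0 0 k * Bm k l) - z0 0 k * gv l.
Proof.
have [i [j [aij Ek]]] := E_pair k.
rewrite (xvec_E Hirr Hsym xs Ek) => xp.
rewrite (Jac_isd _ Ek) yH // subrr mul0r addr0 (B_pair _ Ek).
have cp := cx xp.
have Xi : xv x i != 0 by rewrite gt_eqF // (xpos cp).
have Xj : xv x j != 0 by rewrite gt_eqF // (@xpos j i) // as_ ps.
rewrite -(yH xp) /ys /dys cp /Wd !(X0 Hirr Hsym xs x0) (Z0 Hirr Hsym xs x0) zarr_delta -Ek (inj_eq (@E_inj _ _)).
rewrite /dW !xv_delta //.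
rewrite [l == k]eq_sym.
move: ((k == l)%:R) ((i \in E l)%:R) ((j \in E l)%:R) (gv l) (c i j) (x i j) => d1 d2 d3 g cc xx.
field. by rewrite Xi Xj.
Qed.

Lemma JacN k l : z0 0 k = 0 -> k != l -> Jac a p z0 k l = 0.
Proof.
have [i [j [aij Ek]]] := E_pair k.
rewrite (xvec_E Hirr Hsym xs Ek) => x0k kl.
by rewrite (Jac_isd _ Ek) x0k mul0r add0r (negbTE kl) mulr0.
Qed.

End JacF.

Section Spec.
Variables (R : realType) (n : nat).
Local Notation C := (R[i]).
Local Notation toC := (real_complex R).

Lemma conj_toC (r : R) : Num.conj (toC r) = toC r.
Proof. by rewrite /Num.conj /= oppr0. Qed.

Lemma Re_toC (r : R) : complex.Re (toC r) = r.
Proof. by []. Qed.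

Lemma Re_sumC (I : finType) (F : I -> C) : complex.Re (\sum_i F i) = \sum_i complex.Re (F i).
Proof. by apply: (big_morph _ (fun x y => _) _) => [[? ?] [? ?]|]. Qed.

Lemma Re_cdc (c d : C) : complex.Re (c * d * Num.conj c) =
  complex.Re d * (complex.Re c ^+ 2 + complex.Im c ^+ 2).
Proof. by case: c => a b; case: d => e f; rewrite /Num.conj /=; ring. Qed.

Lemma tC_real (M : 'M[R]_n) : (map_mx toC M)^t*%sesqui = map_mx toC M^T.
Proof. by apply/matrixP => i j; rewrite !mxE conj_toC. Qed.


Lemma spec_pos (Q : 'M[R]_n) (f : 'rV[R]_n) : Q^T = Q -> 0 < (f *m Q *m f^T) 0 0 ->
  exists (l : C) (phi : 'rV[C]_n),
    0 < complex.Re l /\ phi != 0 /\ phi *m map_mx toC Q = l *: phi.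
Proof.
move=> Qs fpos.
set A := map_mx toC Q.
have At : A^t*%sesqui = A by rewrite /A tC_real Qs.
have An : A \is normalmx by apply/normalmxP; rewrite At.
have /orthomx_spectralP AE := An.
set P := spectralmx A in AE; set d := spectral_diag A in AE.
have Pu : P \is unitarymx := spectral_unitarymx A.
have PPt : P *m P^t*%sesqui = 1%:M by apply/unitarymxP.
have iP : invmx P = P^t*%sesqui := invmx_unitary Pu.
rewrite iP in AE.
have PA : P *m A = diag_mx d *m P.
  by rewrite [in LHS]AE !mulmxA PPt mul1mx.
have [i Hi] : exists i, 0 < complex.Re (d 0 i).
  case: (boolP [exists i, 0 < complex.Re (d 0 i)]) => [/existsP //|].
  rewrite negb_exists => /forallP Hd; exfalso.
  set fc := map_mx toC f.
  have E1 : (fc *m A *m fc^t*%sesqui) 0 0 = toC ((f *m Q *m f^T) 0 0).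
    have -> : fc^t*%sesqui = map_mx toC f^T.
      by apply/matrixP => a b; rewrite !mxE conj_toC.
    by rewrite /fc /A -!map_mxM mxE.
  set c := fc *m P^t*%sesqui.
  have ct : c^t*%sesqui = P *m fc^t*%sesqui.
    by rewrite /c trmx_mul map_mxM trmxCK.
  have E2 : (fc *m A *m fc^t*%sesqui) 0 0 =
      \sum_j c 0 j * d 0 j * Num.conj (c 0 j).
    rewrite [in LHS]AE -!mulmxA -ct !mulmxA -/c mul_mx_diag mxE; apply: eq_bigr => j _.
    by rewrite !mxE.
  have := congr1 (@complex.Re R) E2; rewrite E1 Re_toC Re_sumC => Ef.
  have : \sum_j complex.Re (c 0 j * d 0 j * Num.conj (c 0 j)) <= 0.
    rewrite -oppr_ge0 -sumrN; apply: sumr_ge0 => j _.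
    rewrite Re_cdc oppr_ge0 mulr_le0_ge0 //; last by rewrite addr_ge0 ?sqr_ge0.
    by rewrite leNgt (Hd j).
  by rewrite -Ef leNgt fpos.
exists (d 0 i), (row i P); split => //; split.
  apply/negP => /eqP P0.
  have := congr1 (row i) PPt; rewrite row_mul P0 mul0mx => /rowP /(_ i).
  by rewrite !mxE eqxx /= => /eqP; rewrite eq_sym oner_eq0.
have := congr1 (row i) PA; rewrite row_mul => ->.
by apply/rowP => j; rewrite mul_diag_mx !mxE.
Qed.

End Spec.
Section Unstable.
Variables (R : realType) (n : nat).
Local Notation C := (R[i]).
Local Notation toC := (real_complex R).
Variables (J : 'M[R]_n) (zf : 'I_n -> R) (B : 'I_n -> 'I_n -> R) (H0 : R) (g : 'I_n -> R).
Hypothesis zf0 : forall k, 0 <= zf k.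
Hypothesis H0p : 0 < H0.
Hypothesis JS : forall k l, 0 < zf k -> J k l = H0 * ((k == l)%:R - zf k * B k l) - zf k * g l.
Hypothesis JN : forall k l, zf k = 0 -> k != l -> J k l = 0.
Hypothesis Bsym : forall k l, B k l = B l k.
Hypothesis Bsum : forall k, 0 < zf k -> \sum_l zf l * B k l = 2.

Definition sq k := Num.sqrt (zf k).
Definition sg k : R := if 0 < zf k then 1 else -1.
Definition Qm : 'M[R]_n := \matrix_(k, l) ((k == l)%:R * sg k - sq k * sq l * B k l).

Lemma sq_sq k : sq k * sq k = zf k.
Proof. by rewrite -expr2 sqr_sqrtr. Qed.

Lemma zf_cases k : (0 < zf k) \/ (zf k = 0).
Proof. by have := zf0 k; rewrite le_eqVlt => /orP [/eqP <-|]; [right|left]. Qed.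

Lemma sq0 k : zf k = 0 -> sq k = 0.
Proof. by rewrite /sq => ->; rewrite sqrtr0. Qed.

Lemma sq_neq0 k : 0 < zf k -> sq k != 0.
Proof. by move=> h; rewrite gt_eqF // sqrtr_gt0. Qed.

Lemma QmT : Qm^T = Qm.
Proof.
apply/matrixP => k l; rewrite !mxE Bsym.
case: (eqVneq k l) => [->|kl]; first by [].
by rewrite !mul0r; congr (_ - _); ring.
Qed.

Definition Dg k := if 0 < zf k then H0 else J k k.

Lemma Jform k l : J k l = (k == l)%:R * Dg k - zf k * (H0 * B k l + g l).
Proof.
rewrite /Dg; case: (zf_cases k) => h.
  by rewrite h JS //; ring.
rewrite h ltxx mul0r subr0.
case: (eqVneq k l) => [->|kl]; first by rewrite mul1r.
by rewrite mul0r JN.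
Qed.


Lemma sum_delta_l (F : 'I_n -> C) l : \sum_k (k == l)%:R * F k = F l.
Proof.
rewrite (bigD1 l) //= eqxx mul1r big1 ?addr0 // => k /negbTE ->.
by rewrite mul0r.
Qed.

Lemma rowQ k : \sum_l Qm k l * sq l = - sq k.
Proof.
transitivity (\sum_l ((l == k)%:R * (sg k * sq l)) - sq k * \sum_l (zf l * B k l)).
  rewrite mulr_sumr -sumrB; apply: eq_bigr => l _; rewrite mxE eq_sym.
  by rewrite -[zf l]sq_sq; ring.
rewrite (bigD1 k) //= eqxx mul1r big1 ?addr0; last first.
  by move=> l /negbTE ->; rewrite mul0r.
rewrite /sg; case: (zf_cases k) => h.
  by rewrite h Bsum //; ring.
by rewrite sq0 //; ring.
Qed.

Lemma Re_add1 (c : C) : complex.Re (c + 1) = complex.Re c + 1.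
Proof. by case: c. Qed.

Lemma Re_toCM (r : R) (c : C) : complex.Re (toC r * c) = r * complex.Re c.
Proof. by case: c => u w /=; ring. Qed.

Lemma unstable (f : 'rV[R]_n) : 0 < (f *m Qm *m f^T) 0 0 ->
  exists (mu : C) (U : 'rV[C]_n),
    0 < complex.Re mu /\ U != 0 /\ U *m map_mx toC J = mu *: U.
Proof.
move=> fpos.
have [lam [phi [Hl [phi0 Heig]]]] := spec_pos QmT fpos.
set r := fun l => \sum_k phi 0 k * toC (sq k) * toC (B k l).
set Sg := \sum_k phi 0 k * toC (sq k).
have lam1 : lam + 1 != 0.
  apply/eqP => /(congr1 (@complex.Re R)); rewrite Re_add1 /= => E.
  by move: Hl; rewrite -[complex.Re lam](addrK 1) E sub0r oppr_gt0 ltr10.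
have Hent l : phi 0 l * toC (sg l) - toC (sq l) * r l = lam * phi 0 l.
  have := congr1 (fun M : 'M[C]_(1,n) => M 0 l) Heig; rewrite !mxE => <-.
  transitivity (\sum_k ((k == l)%:R * (phi 0 k * toC (sg k))
       - toC (sq l) * (phi 0 k * toC (sq k) * toC (B k l)))).
    by rewrite sumrB sum_delta_l -mulr_sumr.
  apply: eq_bigr => k _; rewrite !mxE !rmorphB !rmorphM rmorph_nat; ring.
have phiN l : zf l = 0 -> phi 0 l = 0.
  move=> z; have := Hent l; rewrite sq0 // /sg z ltxx rmorph0 mul0r subr0 rmorphN rmorph1.
  move=> E; have : (lam + 1) * phi 0 l = 0.
    by rewrite mulrDl mul1r -E mulrN1 addNr.
  by move/eqP; rewrite mulf_eq0 (negbTE lam1) => /eqP.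
have HS0 : Sg = 0.
  have E1 : \sum_l (phi *m map_mx toC Qm) 0 l * toC (sq l) = lam * Sg.
    rewrite Heig mulr_sumr; apply: eq_bigr => l _; rewrite !mxE; ring.
  have E2 : \sum_l (phi *m map_mx toC Qm) 0 l * toC (sq l) = - Sg.
    transitivity (\sum_k phi 0 k * toC (\sum_l Qm k l * sq l)).
      under eq_bigr do rewrite mxE mulr_suml.
      rewrite exchange_big /=; apply: eq_bigr => k _.
      rewrite rmorph_sum mulr_sumr; apply: eq_bigr => l _; rewrite !mxE rmorphM; ring.
    rewrite /Sg -sumrN; apply: eq_bigr => k _; rewrite rowQ rmorphN; ring.
  have : (lam + 1) * Sg = 0 by rewrite mulrDl mul1r -E1 E2 addrC subrr.
  by move/eqP; rewrite mulf_eq0 (negbTE lam1) => /eqP.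
set mu := toC H0 * lam.
have Remu : 0 < complex.Re mu by rewrite /mu Re_toCM mulr_gt0.
case: (boolP [exists l, (zf l == 0) && (toC (J l l) == mu)]).
  move=> /existsP [l /andP [/eqP zl /eqP Jl]].
  exists mu, (delta_mx 0 l); split => //; split.
    apply/negP => /eqP /matrixP /(_ 0 l); rewrite !mxE !eqxx /= => /eqP.
    by rewrite oner_eq0.
  rewrite -rowE; apply/rowP => m; rewrite !mxE eqxx /=.
  case: (eqVneq m l) => [->|ml]; first by rewrite Jl mulr1.
  by rewrite JN // 1?eq_sym // rmorph0 mulr0.
rewrite negb_exists => /forallP Hne.
pose U := \row_l (if 0 < zf l then phi 0 l / toC (sq l)
                  else - (toC H0 * r l) / (mu - toC (J l l))).
have UZ k : U 0 k * toC (zf k) = phi 0 k * toC (sq k).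
  rewrite mxE; case: (zf_cases k) => h.
    rewrite h -[zf k]sq_sq rmorphM; field.
    by rewrite (inj_eq (@complexI R)) sq_neq0.
  by rewrite h sq0 // rmorph0 !mulr0.
exists mu, U; split => //; split.
  apply: contra phi0 => /eqP U0; apply/eqP/rowP => k; rewrite mxE.
  case: (zf_cases k) => h; last exact: phiN.
  have := congr1 (fun M : 'M[C]_(1,n) => M 0 k) U0; rewrite !mxE h => /eqP.
  rewrite mulf_eq0 invr_eq0 (inj_eq (@complexI R)) (negbTE (sq_neq0 h)) orbF.
  by move/eqP.
apply/rowP => l; rewrite !mxE.
transitivity (U 0 l * toC (Dg l) - toC H0 * r l - toC (g l) * Sg).
  transitivity (\sum_k ((k == l)%:R * (U 0 k * toC (Dg k))
      - toC H0 * (U 0 k * toC (zf k) * toC (B k l))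
      - toC (g l) * (U 0 k * toC (zf k)))).
    apply: eq_bigr => k _.
    have -> : (map_mx toC J) k l = toC (J k l) by rewrite mxE.
    rewrite [J k l]Jform !rmorphB !rmorphM rmorphD !rmorphM rmorph_nat.
    ring.
  rewrite !sumrB sum_delta_l -!mulr_sumr.
  by congr (_ - _ * _ - _ * _); apply: eq_bigr => k _; rewrite UZ.
rewrite HS0 mulr0 subr0 /Dg.
case: (zf_cases l) => h.
  have E := Hent l; rewrite /sg h /= rmorph1 mulr1 in E.
  have sl : toC (sq l) != 0 by rewrite (inj_eq (@complexI R)) sq_neq0.
  have rl : r l = (1 - lam) * (phi 0 l / toC (sq l)).
    apply: (mulfI sl).
    have -> : toC (sq l) * r l = phi 0 l - lam * phi 0 l by rewrite -E; ring.
    by field.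
  by rewrite rl mxE h /mu; field.
have hl : mu - toC (J l l) != 0.
  have := Hne l; rewrite h eqxx /= => Jl; by rewrite subr_eq0 eq_sym.
rewrite mxE h ltxx; field => //.
Qed.

End Unstable.
Section Quad.
Variables (R : realType) (n : nat).
Lemma dQd (Q : 'M[R]_n) (e f : 'I_n) :
  ((delta_mx 0 e : 'rV[R]_n) *m Q *m (delta_mx 0 f : 'rV[R]_n)^T) 0 0 = Q e f.
Proof. by rewrite trmx_delta -rowE -colE !mxE. Qed.

Lemma quad2 (Q : 'M[R]_n) (e f : 'I_n) (al be : R) :
  ((al *: (delta_mx 0 e : 'rV[R]_n) + be *: delta_mx 0 f) *m Q *m
     (al *: (delta_mx 0 e : 'rV[R]_n) + be *: delta_mx 0 f)^T) 0 0 =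
  al ^+ 2 * Q e e + al * be * (Q e f + Q f e) + be ^+ 2 * Q f f.
Proof.
rewrite linearD /= !linearZ /= !mulmxDl !mulmxDr -!scalemxAl -!scalemxAr.
have aE (A B : 'M[R]_1) : (A + B) 0 0 = A 0 0 + B 0 0 by rewrite mxE.
have sE (k : R) (A : 'M[R]_1) : (k *: A) 0 0 = k * A 0 0 by rewrite mxE.
rewrite !aE !sE !dQd; ring.
Qed.
End Quad.
Section Final.
Variables (R : realType) (T : finType) (adj : rel T) (a p x : T -> T -> R).
Hypothesis Hirr : forall i, ~~ adj i i.
Hypothesis Hsym : forall i j, adj i j = adj j i.
Hypothesis as_ : forall i j, a i j = a j i.
Hypothesis a0 : forall i j, 0 <= a i j.
Hypothesis ps : forall i j, p i j = p j i.
Hypothesis p01 : forall i j, 0 <= p i j <= 1.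
Hypothesis xs : forall i j, x i j = x j i.
Hypothesis xnn : forall i j, 0 <= x i j.
Hypothesis x0 : forall i j, ~~ adj i j -> x i j = 0.
Hypothesis xpos0 : 0 < \sum_i \sum_(j | 0 < a i j * p i j) x i j.
Hypothesis Ff0 : forall i j, Ff a p x i j = 0.
Hypothesis nB : ~ inBoundary a p x.
Local Notation n := (nE adj).
Local Notation E := (@edge_set T adj).
Local Notation z0 := (xvec adj x).
Local Notation c i j := (a i j * p i j).

Lemma c0 i j : 0 <= c i j.
Proof. by rewrite mulr_ge0 // (andP (p01 i j)).1. Qed.

Lemma csym i j : c i j = c j i.
Proof. by rewrite as_ ps. Qed.

Lemma xv_ge0 i : 0 <= xv x i.
Proof. by apply: sumr_ge0. Qed.

Lemma x_le_xv i j : x i j <= xv x i.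
Proof. by rewrite /xv (bigD1 j) //= lerDl sumr_ge0. Qed.

Lemma xpos i j : 0 < c i j -> 0 < xv x i.
Proof.
move=> cp; rewrite lt_def xv_ge0 andbT; apply/negP => /eqP X0'.
apply: nB; exists i; split; first by exists j.
have := X0'; rewrite /xv => /eqP; rewrite psumr_eq0 // => /allP H.
by rewrite big1 // => w _; apply/eqP/H; rewrite mem_index_enum.
Qed.

Lemma Hf_pos : 0 < Hf a p x.
Proof.
have [i [j [cp xp]]] : exists i j, 0 < c i j /\ 0 < x i j.
  case: (boolP [exists i, [exists j, (0 < c i j) && (0 < x i j)]]).
    by move=> /existsP [i /existsP [j /andP [h1 h2]]]; exists i, j.
  rewrite negb_exists => /forallP H; exfalso; move: xpos0.
  rewrite big1 ?ltxx // => i _; rewrite big1 // => j cp.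
  have := H i; rewrite negb_exists => /forallP /(_ j); rewrite cp /= => xp.
  by apply/eqP; rewrite eq_le xnn andbT leNgt.
have term : 0 < c i j * x i j ^+ 2 / (xv x i * xv x j).
  have Xi := xpos cp.
  have Xj : 0 < xv x j by apply: (@xpos j i); rewrite csym.
  exact: (divr_gt0 (mulr_gt0 cp (exprn_gt0 _ xp)) (mulr_gt0 Xi Xj)).
rewrite /Hf (bigD1 i) //= (bigD1 j) //=.
apply: (lt_le_trans term); rewrite -addrA lerDl addr_ge0 //.
  apply: sumr_ge0 => k _; apply: divr_ge0; first by rewrite mulr_ge0 ?c0 ?sqr_ge0.
  by rewrite mulr_ge0 ?xv_ge0.
apply: sumr_ge0 => k _; apply: sumr_ge0 => l _; apply: divr_ge0.
  by rewrite mulr_ge0 ?c0 ?sqr_ge0.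
by rewrite mulr_ge0 ?xv_ge0.
Qed.

Lemma yfH i j : 0 < x i j -> yf a p x i j = Hf a p x.
Proof.
move=> xp; have := Ff0 i j; rewrite /Ff gt_eqF //.
by move/eqP; rewrite mulf_eq0 gt_eqF //= subr_eq0 => /eqP.
Qed.

Lemma cx i j : 0 < x i j -> 0 < c i j.
Proof.
move=> xp; have := yfH xp; rewrite /yf; case: ifP => // _ E.
by move: Hf_pos; rewrite -E ltxx.
Qed.

Lemma Hs_eq : Hs a p z0 = Hf a p x.
Proof.
rewrite /Hs /Hf; apply: eq_bigr => i _.
rewrite [LHS]big_mkcond [RHS]big_mkcond; apply: eq_bigr => j _.
rewrite (zarr_xvec Hirr Hsym) // !(X0 Hirr Hsym xs x0).
case: (boolP (0 < x i j)) => xp; first by rewrite (cx xp).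
have -> : x i j = 0 by apply/eqP; rewrite eq_le xnn andbT leNgt.
by case: ifP => // _; rewrite expr0n /= mulr0 mul0r.
Qed.

Lemma yH i j : 0 < x i j -> ys a p z0 i j = Hs a p z0.
Proof.
move=> xp; rewrite Hs_eq -(yfH xp) /ys /yf.
by rewrite (zarr_xvec Hirr Hsym) // !(X0 Hirr Hsym xs x0).
Qed.


Hypothesis stab : forall lam : R[i],
    eigenvalue (map_mx (fun r : R => r%:C%C) (Jac a p (xvec adj x))) lam ->
    complex.Re lam <= 0.

Definition zf (k : 'I_n) := z0 0 k.

Lemma zf_ge0 k : 0 <= zf k.
Proof. by have [i [j [_ Ek]]] := E_pair k; rewrite /zf (xvec_E Hirr Hsym xs Ek). Qed.

Lemma H0p : 0 < Hs a p z0.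
Proof. by rewrite Hs_eq Hf_pos. Qed.

Lemma Bsym (k l : 'I_n) : Bm x k l = Bm x l k.
Proof. by rewrite /Bm finset.setIC. Qed.

Lemma Xsum (u : T) : \sum_(l < n) zf l * (u \in E l)%:R = xv x u.
Proof.
rewrite /xv; under [RHS]eq_bigr do rewrite -(Z0 Hirr Hsym xs x0) zarr_coef.
rewrite exchange_big /=; apply: eq_bigr => l _.
rewrite -(xv_delta R Hirr) /xv mulr_sumr; apply: eq_bigr => w _.
by rewrite zarr_delta mulrC.
Qed.

Lemma Bsum (k : 'I_n) : 0 < zf k -> \sum_l zf l * Bm x k l = 2.
Proof.
have [i [j [_ Ek]]] := E_pair k.
rewrite /zf (xvec_E Hirr Hsym xs Ek) => xp.
have cp := cx xp.
have Xi : 0 < xv x i := xpos cp.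
have Xj : 0 < xv x j by apply: (@xpos j i); rewrite csym.
transitivity (\sum_l zf l * (i \in E l)%:R * (xv x i)^-1 + \sum_l zf l * (j \in E l)%:R * (xv x j)^-1).
  rewrite -big_split /=; apply: eq_bigr => l _; rewrite (B_pair x Hirr Hsym l Ek) /zf; ring.
by rewrite -!mulr_suml !Xsum !mulfV ?gt_eqF.
Qed.

Lemma no_unstable (f : 'rV[R]_n) : 0 < (f *m Qm zf (Bm x) *m f^T) 0 0 -> False.
Proof.
move=> fpos.
have JSh := JacS Hirr Hsym as_ ps xs x0 xpos cx yH.
have JNh := JacN Hirr Hsym as_ ps xs x0 xpos.
have [mu [U [Hm [U0 HU]]]] := unstable zf_ge0 H0p JSh JNh Bsym Bsum fpos.
have : complex.Re mu <= 0.
  by apply: stab; apply/eigenvalueP; exists U.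
by rewrite leNgt Hm.
Qed.


Lemma leaf (e f : 'I_n) (u b d : T) : E e = [set u; b] -> E f = [set b; d] ->
  u != d -> 0 < x u b -> 0 < x b d -> xv x u = x u b.
Proof.
move=> Ee Ef ud xub xbd.
have ub : u != b := E_neq Hirr Hsym Ee.
have bd : b != d := E_neq Hirr Hsym Ef.
have ef : e != f.
  apply/negP => /eqP eqef; move: Ee; rewrite eqef Ef => /setP /(_ u).
  rewrite !inE eqxx /= => /orP [] /eqP E'.
    by rewrite E' eqxx in ub.
  by rewrite E' eqxx in ud.
apply/eqP; rewrite eq_le x_le_xv andbT leNgt; apply/negP => lt.
apply: (@no_unstable ((sq zf e)^-1 *: delta_mx 0 e + (- (sq zf f)^-1) *: delta_mx 0 f)).
rewrite quad2 !mxE !eqxx (negbTE ef) eq_sym (negbTE ef).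
have zep : 0 < zf e by rewrite /zf (xvec_E Hirr Hsym xs Ee).
have zfp : 0 < zf f by rewrite /zf (xvec_E Hirr Hsym xs Ef).
rewrite /sg zep zfp.
rewrite (B_pair x Hirr Hsym e Ee) (B_pair x Hirr Hsym f Ee).
rewrite (B_pair x Hirr Hsym e Ef) (B_pair x Hirr Hsym f Ef).
rewrite Ee Ef !inE !eqxx /= !orbT (negbTE ub) (negbTE ud) [d == u]eq_sym (negbTE ud)
  [d == b]eq_sym (negbTE bd) /=.
have cub := cx xub.
have Xu : 0 < xv x u := xpos cub.
have Xb : 0 < xv x b by apply: (@xpos b u); rewrite csym.
have cbd := cx xbd.
have Xd : 0 < xv x d by apply: (@xpos d b); rewrite csym.
have ze : sq zf e * sq zf e = x u b by rewrite (sq_sq zf_ge0) /zf (xvec_E Hirr Hsym xs Ee).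
have zf2 : sq zf f * sq zf f = x b d by rewrite (sq_sq zf_ge0) /zf (xvec_E Hirr Hsym xs Ef).
have se0 := sq_neq0 zep.
have sf0 := sq_neq0 zfp.
set se := sq zf e in ze se0 *; set sf := sq zf f in zf2 sf0 *.
have Xu0 : xv x u != 0 by rewrite gt_eqF.
have Xb0 : xv x b != 0 by rewrite gt_eqF.
have Xd0 : xv x d != 0 by rewrite gt_eqF.
rewrite (_ : _ + _ = (se * se)^-1 - (xv x u)^-1 + (sf * sf)^-1 - (xv x d)^-1); last first.
  by field; rewrite ?se0 ?sf0 ?Xu0 ?Xb0 ?Xd0.
rewrite ze zf2.
have h1 : (xv x u)^-1 < (x u b)^-1 by rewrite ltf_pV2 // posrE.
have h2 : (xv x d)^-1 <= (x b d)^-1 by rewrite lef_pV2 ?posrE // xs x_le_xv.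
lra.
Qed.


Lemma x_adj u w : 0 < x u w -> adj u w.
Proof. by move=> h; apply/negPn/negP => /x0 e; rewrite e ltxx in h. Qed.

Lemma cXb (u b : T) (e f : 'I_n) d : E e = [set u; b] -> E f = [set b; d] -> u != d ->
  0 < x u b -> 0 < x b d -> c u b = Hs a p z0 * xv x b.
Proof.
move=> Ee Ef ud xub xbd.
have L := leaf Ee Ef ud xub xbd.
have E1 := yH xub.
rewrite /ys (cx xub) (zarr_xvec Hirr Hsym) // !(X0 Hirr Hsym xs x0) L in E1.
have Xb : 0 < xv x b by apply: (@xpos b u); rewrite csym; apply: cx.
rewrite -E1; field; by rewrite !gt_eqF.
Qed.

Lemma adjc (u b d : T) : 0 < x u b -> 0 < x b d -> c u b = c b d.
Proof.
case: (eqVneq u d) => [->|ud] xub xbd; first by rewrite csym.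
have [e Ee] := E_exists (x_adj xub).
have [f Ef] := E_exists (x_adj xbd).
have E1 := cXb Ee Ef ud xub xbd.
have Ef' : E f = [set d; b] by rewrite Ef finset.setUC.
have Ee' : E e = [set b; u] by rewrite Ee finset.setUC.
have xdb : 0 < x d b by rewrite xs.
have xbu : 0 < x b u by rewrite xs.
have du : d != u by rewrite eq_sym.
have E2 := cXb Ef' Ee' du xdb xbu.
by rewrite E1 csym E2.
Qed.

Lemma comp_c (i j : T) : 0 < x i j -> forall k l, connect (Gx x) i k -> 0 < x k l ->
  c k l = c i j.
Proof.
move=> xij k l /connectP [pth Hp ->] xkl.
have P0 : forall w, 0 < x i w -> c i w = c i j.
  move=> w xiw; rewrite csym; apply: adjc => //; by rewrite xs.
move: P0; move: (c i j) => C0 P0.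
elim: pth i P0 Hp xkl {xij} => [|v pth IH] u0 P0 /=; first by move=> _ xl; apply: P0.
move=> /andP [g hp] xl.
apply: (IH v) => // w xvw.
by rewrite -(adjc g xvw); apply: P0.
Qed.

End Final.

Unset Implicit Arguments.

Theorem lemma10 (R : realType) (T : finType) (adj : rel T)
    (a p : T -> T -> R) (h1 : R) (x : T -> T -> R) :
  simple_graph adj ->
  weights_ok adj a p ->
  0 < h1 <= 1 ->
  inGammaS adj a p h1 x ->
  forall i j k l : T,
    connect (Gx x) i j -> connect (Gx x) i k -> connect (Gx x) i l ->
    0 < x i j -> 0 < x k l ->
    a i j * p i j = a k l * p k l.
Proof.
move=> [Hirr Hsym] [[as_ a0 _] [ps p01 _ _]] /andP [h1p _].
move=> [[[[xs xnn x0 _ hsum] Ff0] nB] stab] i j k l _ cik _ xij xkl.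
have xpos0 : 0 < \sum_i \sum_(j | 0 < a i j * p i j) x i j := lt_le_trans h1p hsum.
by rewrite (comp_c Hirr Hsym as_ a0 ps p01 xs xnn x0 xpos0 Ff0 nB stab xij cik xkl).
Qed.
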